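(* For every integer $k\ge 1$ there exists an acyclic temporal network $N=((V\cup \{s\},A),\tau)$ such that $\lambda_{N}(s,v)\ge k$ for all $v\in V$, but $N$ contains no two arc-disjoint spanning $\tau$-respecting $s$-arborescences.
   Context: A temporal network is a pair $N=(D,\tau)$ where $D=(V\cup\{s\},A)$ is a directed graph (parallel arcs allowed) with root $s$ entered by no arc, and $\tau:A\to\mathbb{N}$; it is acyclic if $D$ has no directed cycle. A directed path with arcs $a_1,\dots,a_\ell$ in order is $\tau$-respecting if $\tau(a_1)\le\dots\le\tau(a_\ell)$; $\lambda_N(s,v)$ is the maximum number of pairwise arc-disjoint $\tau$-respecting $(s,v)$-paths. An $s$-arborescence is an acyclic subgraph $F=(V'\cup\{s\},A')$ in which every vertex of $V'$ has in-degree exactly $1$; it is spanning if $V'=V$, and $\tau$-respecting if every path in $F$ from $s$ is $\tau$-respecting. *)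

(* Defs.v *)
From mathcomp Require Export all_boot.
Set Implicit Arguments. Unset Strict Implicit. Unset Printing Implicit Defensive.

(* A (finite) temporal network: vertex type (V together with the troot s),
   arcs (a finite type, so parallel arcs are allowed), tail/head maps and
   the time labelling tau : A -> nat. *)
Record tnet := TNet {
  vert : finType;
  troot : vert;
  arc : finType;
  tl : arc -> vert;
  hd : arc -> vert;
  tau : arc -> nat }.

Section TNet.
Variable N : tnet.
Local Notation V := (vert N).
Local Notation A := (arc N).

Fixpoint is_walk (x y : V) (p : seq A) : bool :=
  match p with
  | [::] => x == y
  | a :: p' => (tl a == x) && is_walk (hd a) y p'
  end.

Definition dpath (x y : V) (p : seq A) : bool :=
  is_walk x y p && uniq (x :: map (@hd N) p).

Definition dcycle (x : V) (p : seq A) : bool :=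
  (p != [::]) && is_walk x x p && uniq (map (@hd N) p).

Definition respecting (p : seq A) : bool := sorted leq (map (@tau N) p).

Definition root_unentered : Prop := forall a : A, hd a != troot N.

Definition acyclic_on (F : {set A}) : Prop :=
  forall (x : V) (p : seq A), all (fun a => a \in F) p -> ~~ dcycle x p.

Definition acyclic : Prop := acyclic_on [set: A].

Definition lambda_ge (v : V) (k : nat) : Prop :=
  exists P : 'I_k -> seq A,
    (forall i, dpath (troot N) v (P i) && respecting (P i)) /\
    (forall i j, i != j -> forall a, a \in P i -> a \notin P j).

Definition spanning_arborescence (F : {set A}) : Prop :=
  acyclic_on F /\
  forall v : V, v != troot N -> #|[set a in F | hd a == v]| = 1.

Definition respecting_arb (F : {set A}) : Prop :=
  forall (v : V) (p : seq A),
    all (fun a => a \in F) p -> dpath (troot N) v p -> respecting p.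

End TNet.
Arguments lambda_ge : clear implicits.
Arguments spanning_arborescence : clear implicits.
Arguments respecting_arb : clear implicits.
Arguments acyclic : clear implicits.
Arguments root_unentered : clear implicits.

(* Main.v *)
From mathcomp Require Import all_boot zify.
Require Import Defs.

Lemma sub_card (T : finType) (A : {set T}) m : m <= #|A| ->
  exists B : {set T}, B \subset A /\ #|B| = m.
Proof.
move=> hm; exists [set x in take m (enum A)]; split.
  by apply/subsetP=> x; rewrite inE => /mem_take; rewrite mem_enum.
rewrite cardsE; have /card_uniqP -> : uniq (take m (enum A)) by apply: take_uniq; exact: enum_uniq.
by rewrite size_takel // -cardE.
Qed.

Section Constr.
Variable k : nat.
Definition nn := (k + k).-1.
Definition Z := {S : {set 'I_nn} | #|S| == k}.
Definition Vt := (unit + ('I_nn + Z))%type.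
Definition ZA := {p : Z * 'I_nn | p.2 \in val p.1}.
Definition At := (('I_nn * 'I_k) + ZA)%type.
Definition tlf (a : At) : Vt := match a with inl _ => inl tt | inr p => inr (inl (val p).2) end.
Definition hdf (a : At) : Vt := match a with inl p => inr (inl p.1) | inr p => inr (inr (val p).1) end.
Definition tauf (a : At) : nat := match a with inl p => if nat_of_ord p.2 == 0 then 1 else 3 | inr _ => 2 end.
Definition mk : tnet := @TNet Vt (inl tt) At tlf hdf tauf.
End Constr.

Definition rk {k} (v : Vt k) : nat := match v with inl _ => 0 | inr (inl _) => 1 | inr (inr _) => 2 end.

Lemma walk_rk k (x y : vert (mk k)) p : is_walk x y p -> rk x + size p <= rk y.
Proof.
elim: p x => [|a p IH] x /=; first by move/eqP->; rewrite addn0.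
case/andP=> /eqP <- /IH; case: a => [[i j]|[[S i] hi]] /=; lia.
Qed.

Lemma notin22 (T : eqType) (a b c d e : T) : b != d -> b != e -> c != d -> c != e ->
  a \in [:: b; c] -> a \notin [:: d; e].
Proof. by move=> h1 h2 h3 h4; rewrite !inE => /orP [] /eqP ->; rewrite negb_or ?h1 ?h2 ?h3 ?h4. Qed.
Lemma bar k (hk : 0 < k) (S : Z k) u v (hu : u \in val S) (hv : v \in val S) (a : At k) : u != v ->
  a \in [:: (inl (u, Ordinal hk) : At k); inr (exist _ (S, u) hu)] ->
  a \notin [:: (inl (v, Ordinal hk) : At k); inr (exist _ (S, v) hv)].
Proof.
move=> huv; apply: notin22 => //.
  by apply/eqP=> -[] /eqP; rewrite (negbTE huv).
apply/eqP=> -[] /eqP; by rewrite (negbTE huv).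
Qed.


Definition EF {k} (F : {set At k}) : {set 'I_(nn k)} :=
  [set i | [exists j : 'I_k, (nat_of_ord j == 0) && ((inl (i, j) : At k) \in F)]].

Lemma in1 (T : finType) (F : {set T}) (P : pred T) : #|[set a in F | P a]| = 1 ->
  exists a, a \in F /\ P a.
Proof.
move/eqP/cards1P=> [a ha]; exists a.
have : a \in [set a in F | P a] by rewrite ha set11.
by rewrite inE => /andP.
Qed.

Lemma key k (F : {set arc (mk k)}) : spanning_arborescence (mk k) F -> respecting_arb (mk k) F ->
  forall S : Z k, exists2 i, i \in val S & i \in EF F.
Proof.
move=> [_ sp] rF S.
have [a [aF ha]] := in1 _ _ _ (sp (inr (inr S)) isT).
case: a aF ha => [[i j]|[[S' i] hi]] //= aF /eqP [eS]; subst S'.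
have [b [bF hb]] := in1 _ _ _ (sp (inr (inl i)) isT).
case: b bF hb => [[i' j]|[[S' i'] hi']] //= bF /eqP [ei]; subst i'.
exists i => //.
have := rF (inr (inr S)) [:: (inl (i, j) : At k); inr (exist _ (S, i) hi)].
rewrite /= bF aF /dpath /= !eqxx /= => /(_ isT isT).
rewrite /respecting /=.
case: ifP => hj // _.
rewrite inE; apply/existsP; exists j; by rewrite hj.
Qed.
Lemma EFbig k (F : {set arc (mk k)}) : spanning_arborescence (mk k) F -> respecting_arb (mk k) F ->
  k <= #|EF F|.
Proof.
move=> h1 h2; rewrite leqNgt; apply/negP => hlt.
have hc : k <= #|~: EF F|.
  move: (cardsC (EF F)) hlt; move: #|EF F| #|~: EF F| => x y; rewrite card_ord /nn; lia.
have [B [hB cB]] := sub_card _ _ _ hc.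
have [i iB] := key _ _ h1 h2 (exist _ B (introT eqP cB)).
by move/subsetP: hB => /(_ i iB); rewrite inE => /negP.
Qed.

Lemma EFdis k (F1 F2 : {set arc (mk k)}) : [disjoint F1 & F2] -> EF F1 :&: EF F2 = set0.
Proof.
move=> dis; apply/setP=> i; rewrite !inE; apply/negP=> /andP [/existsP [j1 /andP [h1 f1]] /existsP [j2 /andP [h2 f2]]].
have ej : j1 = j2 by apply: val_inj; rewrite /= (eqP h1) (eqP h2).
subst j2.
by move: dis => /disjointFr /(_ f1); rewrite f2.
Qed.
Theorem theorem11 (k : nat) (hk : 1 <= k) :
  exists N : tnet,
    root_unentered N /\ acyclic N /\
    (forall v : vert N, v != troot N -> lambda_ge N v k) /\
    ~ (exists F1 F2 : {set arc N},
          [/\ spanning_arborescence N F1, respecting_arb N F1,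
              spanning_arborescence N F2, respecting_arb N F2
            & [disjoint F1 & F2]]).
Proof.
exists (mk k); split; first by case=> [[i j]|[[S i] hi]].
split.
  move=> x p _; apply/negP; case/andP=> /andP [hp /walk_rk]; case: p hp => // a p _.
  rewrite /=; lia.
split.
  case=> [[]|[i|S]] // _.
    exists (fun j => [:: (inl (i, j) : At k)]); split.
      by move=> j; rewrite /dpath /respecting /= !eqxx.
    move=> j1 j2 hne a; rewrite !inE => /eqP ->; apply/eqP=> -[] /eqP.
    by rewrite (negbTE hne).
  have [e einj eS] : exists2 e : 'I_k -> 'I_(nn k), injective e & forall j, e j \in val S.
    exists (fun j => @enum_val _ (mem (val S)) (cast_ord (esym (eqP (valP S))) j)).
      by move=> j1 j2 /enum_val_inj /cast_ord_inj.
    by move=> j; apply: enum_valP.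
  exists (fun j => [:: (inl (e j, Ordinal hk) : At k); inr (exist _ (S, e j) (eS j))]); split.
    move=> j; rewrite /dpath /respecting; apply/andP; split; last by [].
    apply/andP; split; first by rewrite /= !eqxx.
    by [].
  move=> j1 j2 hne a; apply: bar; apply: contra hne => /eqP /einj -> //.
case=> F1 [F2] [s1 r1 s2 r2 dis].
have := EFbig _ _ s1 r1; have := EFbig _ _ s2 r2.
have := cardsUI (EF F1) (EF F2); rewrite EFdis // cards0 addn0.
have := max_card (EF F1 :|: EF F2); rewrite card_ord /nn.
move: #|EF F1 :|: EF F2| #|EF F1| #|EF F2| => x y z; lia.
Qed.
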